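(* Let $s>3/2$. There is a constant $C>0$ such that for all $\sigma\in(1/2,1]$, all $\omega\in\{-1,1\}$, all integers $n\ge1$ and all $t\in\mathbb R$, the error $E=E^{\omega,n}(t)$ satisfies \[\|E(t)\|_{H^\sigma}\le\begin{cases}C\,n^{-2s+1+\sigma},& 3/2<s<2,\\ C\,n^{-s-1+\sigma},& s\ge2.\end{cases}\]
   Context: $\mathbb S=\mathbb R/(2\pi\mathbb Z)$. For $r\in\mathbb R$, $H^r(\mathbb S)$ is the Sobolev space with norm $\|u\|_{H^r}^2=\sum_{k\in\mathbb Z}(1+k^2)^r|\langle u,\phi_k\rangle|^2$, where $\phi_k(x)=e^{ikx}/\sqrt{2\pi}$, and $\Lambda^r=(1-\partial_x^2)^{r/2}$ is the Fourier multiplier with symbol $(1+k^2)^{r/2}$. For a function $u$ set $R(u):=7u_x^2-3u^4+2u^3-10u^2-2u$. For $s>3/2$, $\omega\in\{-1,1\}$ and integer $n\ge1$ define the approximate solution \[u^{\omega,n}(t,x):=\frac{\omega n^{-1}-1-n^{-s}\cos(nx+\omega t)}{14},\] and its error $E:=u^{\omega,n}_t-u^{\omega,n}_x-14u^{\omega,n}u^{\omega,n}_x-\partial_x\Lambda^{-2}R(u^{\omega,n})$. *)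

(* Defs.v *)
From Stdlib Require Import Reals ClassicalEpsilon.
Open Scope R_scope.

Definition deriv (f : R -> R) (x : R) : R :=
  epsilon (inhabits 0) (fun l => derivable_pt_lim f x l).

Definition integral (f : R -> R) (a b : R) : R :=
  epsilon (inhabits 0)
    (fun I => exists pr : Riemann_integrable f a b, RiemannInt pr = I).

(* Real Fourier coefficients on S = R/2piZ:
   a_k = int_0^{2pi} f cos(kx), b_k = int_0^{2pi} f sin(kx).
   For real f: |<f,phi_k>|^2 = |<f,phi_{-k}>|^2 = (a_k^2 + b_k^2)/(2 pi). *)
Definition fcos (f : R -> R) (k : nat) : R :=
  integral (fun x => f x * cos (INR k * x)) 0 (2 * PI).
Definition fsin (f : R -> R) (k : nat) : R :=
  integral (fun x => f x * sin (INR k * x)) 0 (2 * PI).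

(* Lambda^{-2} f = sum_k (1+k^2)^{-1} <f,phi_k> phi_k, written in real form:
   a_0/(2pi) + sum_{k>=1} (1/pi) (1+k^2)^{-1} (a_k cos kx + b_k sin kx). *)
Definition Lambda_m2_term (f : R -> R) (x : R) (k : nat) : R :=
  match k with
  | O => fcos f 0 / (2 * PI)
  | S _ => / (PI * (1 + INR k ^ 2)) *
           (fcos f k * cos (INR k * x) + fsin f k * sin (INR k * x))
  end.
Definition Lambda_m2 (f : R -> R) (x : R) : R :=
  epsilon (inhabits 0) (fun v => infinite_sum (Lambda_m2_term f x) v).

(* Terms of ||f||_{H^r}^2 = sum_{k in Z} (1+k^2)^r |<f,phi_k>|^2 for real f,
   grouping k and -k for k >= 1. *)
Definition Hs_term (r : R) (f : R -> R) (k : nat) : R :=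
  match k with
  | O => fcos f 0 ^ 2 / (2 * PI)
  | S _ => 2 * Rpower (1 + INR k ^ 2) r * (fcos f k ^ 2 + fsin f k ^ 2) / (2 * PI)
  end.

Definition u_app (s omega : R) (n : nat) (t x : R) : R :=
  (omega / INR n - 1 - Rpower (INR n) (- s) * cos (INR n * x + omega * t)) / 14.

(* R(u) = 7 u_x^2 - 3u^4 + 2u^3 - 10u^2 - 2u, with v = u, vx = u_x. *)
Definition Rnl (v vx : R) : R :=
  7 * vx ^ 2 - 3 * v ^ 4 + 2 * v ^ 3 - 10 * v ^ 2 - 2 * v.

Definition Err (s omega : R) (n : nat) (t x : R) : R :=
  let u := u_app s omega n in
  deriv (fun tau => u tau x) t
  - deriv (fun y => u t y) x
  - 14 * u t x * deriv (fun y => u t y) x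
  - deriv (Lambda_m2 (fun y => Rnl (u t y) (deriv (fun z => u t z) y))) x.

(* Main.v *)
Require Import Defs.
From Stdlib Require Import Reals Lra Lia Nsatz ClassicalEpsilon Classical FunctionalExtensionality.
From Coquelicot Require Import Coquelicot.
Open Scope R_scope.

Lemma integral_of_is_RInt f a b I : is_RInt f a b I -> Defs.integral f a b = I.
Proof.
  intros H.
  pose proof (ex_RInt_Reals_0 f a b (ex_intro _ I H)) as pr.
  unfold Defs.integral.
  destruct (epsilon_spec (inhabits 0) (fun I => exists pr, RiemannInt pr = I)
     (ex_intro _ (RiemannInt pr) (ex_intro _ pr eq_refl))) as [pr' Hpr'].
  rewrite <- Hpr', <- RInt_Reals. apply is_RInt_unique; auto.
Qed.

Lemma deriv_eq f x l : derivable_pt_lim f x l -> deriv f x = l.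
Proof.
  intros H. unfold deriv.
  pose proof (epsilon_spec (inhabits 0) (fun l => derivable_pt_lim f x l) (ex_intro _ l H)) as H2.
  eapply uniqueness_limite; eauto.
Qed.

Lemma is_RInt_val (f : R -> R) a b (I J : R) : I = J -> is_RInt f a b I -> is_RInt f a b J.
Proof. intros ->; auto. Qed.

Lemma int_cos_d (d : nat) c : (1 <= d)%nat ->
  is_RInt (fun x => cos (INR d * x + c)) 0 (2*PI) 0.
Proof.
  intros Hd.
  assert (Hd' : INR d <> 0) by (apply not_0_INR; lia).
  assert (H := is_RInt_derive (fun x => sin (INR d * x + c) / INR d)
                 (fun x => cos (INR d * x + c)) 0 (2*PI)).
  eapply is_RInt_val; [|apply H].
  - unfold minus, plus, opp; simpl.
    replace (INR d * (2*PI) + c) with (c + 2 * INR d * PI) by ring.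
    rewrite sin_period. replace (INR d * 0 + c) with c by ring. field; auto.
    + intros x _. auto_derive; auto. field; auto.
    + intros x _. apply continuity_pt_filterlim. apply derivable_continuous_pt. reg.
Qed.

Lemma int_const (v : R) : is_RInt (fun _ => v) 0 (2*PI) (2*PI*v).
Proof.
  eapply is_RInt_val; [|apply (@is_RInt_const R_NormedModule 0 (2*PI) v)].
  unfold scal; simpl; unfold mult; simpl; ring.
Qed.


Definition Gv (m : nat) (ph : R) (k : nat) (ps : R) : R :=
  if Nat.eqb m k then (if Nat.eqb k 0 then 2*PI*cos ph*cos ps else PI*cos (ph - ps)) else 0.

Lemma int_cc m ph k ps :
  is_RInt (fun x => cos (INR m * x + ph) * cos (INR k * x + ps)) 0 (2*PI) (Gv m ph k ps).
Proof.
  unfold Gv.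
  destruct (Nat.eqb_spec m k) as [<-|Hmk].
  - destruct (Nat.eqb_spec m 0) as [->|Hm0].
    + eapply is_RInt_val; [|eapply is_RInt_ext; [|apply (int_const (cos ph * cos ps))]].
      ring. intros x _. simpl. f_equal; f_equal; ring.
    + eapply is_RInt_val; [|eapply is_RInt_ext; cycle 1].
      2:{ apply (is_RInt_plus _ _ _ _ _ _ (is_RInt_scal _ _ _ (1/2) _ (int_cos_d (m+m) (ph+ps) ltac:(lia)))
              (int_const (1/2 * cos (ph - ps)))). }
      unfold plus, scal; simpl; unfold mult; simpl; field.
      intros x _. unfold plus, scal; simpl; unfold mult; simpl.
      rewrite plus_INR. replace ((INR m + INR m) * x + (ph + ps)) with ((INR m * x + ph) + (INR m * x + ps)) by ring.
      replace (ph - ps) with ((INR m * x + ph) - (INR m * x + ps)) by ring.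
      rewrite cos_plus, cos_minus. field.
  - assert (Hd : exists d c, (1 <= d)%nat /\ forall x, cos (INR m * x + ph - (INR k * x + ps)) = cos (INR d * x + c)).
    { destruct (Nat.lt_ge_cases m k) as [Hlt|Hge].
      - exists (k - m)%nat, (ps - ph). split; [lia|]. intros x.
        rewrite <- cos_neg. f_equal. rewrite minus_INR by lia. ring.
      - exists (m - k)%nat, (ph - ps). split; [lia|]. intros x.
        f_equal. rewrite minus_INR by lia. ring. }
    destruct Hd as [d [c [Hd Hc]]].
    eapply is_RInt_val; [|eapply is_RInt_ext; cycle 1].
    2:{ apply (is_RInt_plus _ _ _ _ _ _ (is_RInt_scal _ _ _ (1/2) _ (int_cos_d (m+k) (ph+ps) ltac:(lia)))
              (is_RInt_scal _ _ _ (1/2) _ (int_cos_d d c Hd))). }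
    unfold plus, scal; simpl; unfold mult; simpl; field.
    intros x _. unfold plus, scal; simpl; unfold mult; simpl.
    rewrite <- Hc, plus_INR.
    replace ((INR m + INR k) * x + (ph + ps)) with ((INR m * x + ph) + (INR k * x + ps)) by ring.
    rewrite cos_plus, cos_minus. field.
Qed.

Definition TP (n N : nat) (c : R) (al be : nat -> R) (x : R) : R :=
  sum_f_R0 (fun j => al j * cos (INR (j*n) * x + INR j * c)
                   + be j * sin (INR (j*n) * x + INR j * c)) N.

Lemma sin_as_cos y : sin y = cos (y + -(PI/2)).
Proof. rewrite <- cos_neg, <- cos_shift. f_equal. ring. Qed.

Definition Jv n c al be k ps j :=
  al j * Gv (j*n) (INR j * c) k ps + be j * Gv (j*n) (INR j * c + -(PI/2)) k ps.

Lemma int_F n N c al be k ps :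
  is_RInt (fun x => TP n N c al be x * cos (INR k * x + ps)) 0 (2*PI)
    (sum_f_R0 (Jv n c al be k ps) N).
Proof.
  assert (Hterm : forall j, is_RInt (fun x => (al j * cos (INR (j*n) * x + INR j * c)
                   + be j * sin (INR (j*n) * x + INR j * c)) * cos (INR k * x + ps)) 0 (2*PI)
                   (Jv n c al be k ps j)).
  { intros j. eapply is_RInt_val; [|eapply is_RInt_ext; cycle 1].
    2:{ apply (is_RInt_plus _ _ _ _ _ _ (is_RInt_scal _ _ _ (al j) _ (int_cc (j*n) (INR j * c) k ps))
              (is_RInt_scal _ _ _ (be j) _ (int_cc (j*n) (INR j * c + -(PI/2)) k ps))). }
    unfold plus, scal; simpl; unfold mult; simpl; unfold Jv; ring.
    intros x _. unfold plus, scal; simpl; unfold mult; simpl.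
    rewrite (sin_as_cos (INR (j * n) * x + INR j * c)).
    replace (INR (j * n) * x + INR j * c + - (PI / 2)) with (INR (j * n) * x + (INR j * c + - (PI / 2))) by ring.
    ring. }
  induction N as [|N IH].
  - simpl. unfold TP; simpl. apply Hterm.
  - eapply is_RInt_val; [|eapply is_RInt_ext; cycle 1].
    2:{ apply (is_RInt_plus _ _ _ _ _ _ IH (Hterm (S N))). }
    all: try (unfold plus; simpl; reflexivity).
    intros x _. unfold TP. cbn [sum_f_R0]. symmetry. apply Rmult_plus_distr_r.
Qed.

Lemma fcos_F n N c al be k :
  fcos (TP n N c al be) k = sum_f_R0 (Jv n c al be k 0) N.
Proof.
  unfold fcos. apply integral_of_is_RInt.
  eapply is_RInt_ext; [|apply int_F]. intros x _. cbv beta. rewrite Rplus_0_r. reflexivity.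
Qed.

Lemma fsin_F n N c al be k :
  fsin (TP n N c al be) k = sum_f_R0 (Jv n c al be k (-(PI/2))) N.
Proof.
  unfold fsin. apply integral_of_is_RInt.
  eapply is_RInt_ext; [|apply int_F]. intros x _. cbv beta. rewrite sin_as_cos. reflexivity.
Qed.

Lemma sum_ind_val m w k :
  sum_f_R0 (fun i => if Nat.eqb m i then w else 0) k = if Nat.leb m k then w else 0.
Proof.
  induction k as [|k IH].
  - simpl. destruct m; reflexivity.
  - simpl sum_f_R0. rewrite IH.
    destruct (Nat.leb_spec m k), (Nat.eqb_spec m (S k)), (Nat.leb_spec m (S k)); try lia; lra.
Qed.

Lemma isum_ind m w : infinite_sum (fun k => if Nat.eqb m k then w else 0) w.
Proof.
  intros eps He. exists m. intros k Hk. rewrite sum_ind_val.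
  destruct (Nat.leb_spec m k); [|lia].
  unfold R_dist. rewrite Rminus_diag, Rabs_R0. lra.
Qed.

Lemma isum_sum N (f : nat -> nat -> R) L :
  (forall j, infinite_sum (f j) (L j)) ->
  infinite_sum (fun k => sum_f_R0 (fun j => f j k) N) (sum_f_R0 L N).
Proof.
  intros H. apply is_series_Reals. induction N as [|N IH].
  - simpl. apply is_series_Reals. apply H.
  - simpl. eapply is_series_ext; [|apply (is_series_plus _ _ _ _ IH (proj2 (is_series_Reals _ _) (H (S N))))].
    intros k. reflexivity.
Qed.

Lemma sum_eq_ext (f g : nat -> R) N : (forall j, f j = g j) -> sum_f_R0 f N = sum_f_R0 g N.
Proof. intros H. induction N; simpl; rewrite ?IHN, ?H; reflexivity. Qed.

Lemma sum_div (f : nat -> R) N a : sum_f_R0 f N / a = sum_f_R0 (fun j => f j / a) N.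
Proof. induction N; simpl; [reflexivity|]. rewrite <- IHN. unfold Rdiv. ring. Qed.

Lemma sum_lin (f g : nat -> R) N a p q :
  a * (sum_f_R0 f N * p + sum_f_R0 g N * q) = sum_f_R0 (fun j => a * (f j * p + g j * q)) N.
Proof. induction N; simpl; [reflexivity|]. rewrite <- IHN. ring. Qed.

Lemma cos_m0 y : cos (y - 0) = cos y.
Proof. f_equal; ring. Qed.
Lemma cos_mpi2 y : cos (y + -(PI/2) - 0) = sin y.
Proof. rewrite sin_as_cos. f_equal; ring. Qed.
Lemma cos_ppi2 y : cos (y - -(PI/2)) = - sin y.
Proof. replace (y - -(PI/2)) with (y + PI/2) by ring. rewrite cos_plus, cos_PI2, sin_PI2. ring. Qed.
Lemma cos_00 y : cos (y + -(PI/2) - -(PI/2)) = cos y.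
Proof. f_equal; ring. Qed.

Definition Wt n c (al be : nat -> R) x j :=
  (al j * cos (INR (j*n) * x + INR j * c) + be j * sin (INR (j*n) * x + INR j * c))
  / (1 + INR (j*n) ^ 2).

Lemma LamTerm_F n N c al be x k :
  Lambda_m2_term (TP n N c al be) x k =
  sum_f_R0 (fun j => if Nat.eqb (j*n) k then Wt n c al be x j else 0) N.
Proof.
  assert (HPI : PI <> 0) by (apply PI_neq0).
  destruct k as [|k].
  - simpl. rewrite fcos_F, sum_div. apply sum_eq_ext. intros j.
    unfold Jv, Gv, Wt. destruct (Nat.eqb_spec (j*n) 0) as [e|e]; simpl.
    + rewrite e. simpl. rewrite cos_0. rewrite (sin_as_cos (0 * x + INR j * c)).
      replace (0 * x + INR j * c) with (INR j * c) by ring.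
      replace (INR j * c + - (PI / 2)) with (INR j * c + - (PI / 2)) by ring. field. auto.
    + unfold Rdiv. ring.
  - unfold Lambda_m2_term. rewrite fcos_F, fsin_F, sum_lin. apply sum_eq_ext. intros j.
    unfold Jv, Gv, Wt. destruct (Nat.eqb_spec (j*n) (S k)) as [e|e]; simpl.
    + rewrite e. rewrite cos_m0, cos_mpi2, cos_ppi2, cos_00.
      change (match k with | 0%nat => 1 | S _ => INR k + 1 end) with (INR (S k)).
      rewrite cos_plus, sin_plus. field. split; auto.
      pose proof (pos_INR (S k)). nra.
    + ring.
Qed.

Lemma Lambda_F n N c al be x :
  Lambda_m2 (TP n N c al be) x =
  TP n N c (fun j => al j / (1 + INR (j*n) ^ 2)) (fun j => be j / (1 + INR (j*n) ^ 2)) x.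
Proof.
  assert (H : infinite_sum (Lambda_m2_term (TP n N c al be) x) (sum_f_R0 (Wt n c al be x) N)).
  { eapply is_series_Reals, is_series_ext; [intros k; symmetry; apply LamTerm_F|].
    apply is_series_Reals. apply isum_sum. intros j. apply isum_ind. }
  unfold Lambda_m2.
  pose proof (epsilon_spec (inhabits 0) (fun v => infinite_sum (Lambda_m2_term (TP n N c al be) x) v) (ex_intro _ _ H)) as H2.
  rewrite (uniqueness_sum _ _ _ H2 H).
  unfold TP. apply sum_eq_ext. intros j. unfold Wt. field.
  pose proof (pos_INR (j*n)). nra.
Qed.

Lemma deriv_TP n N c al be x :
  derivable_pt_lim (TP n N c al be) x
    (TP n N c (fun j => INR (j*n) * be j) (fun j => - INR (j*n) * al j) x).
Proof.
  apply is_derive_Reals. revert x. induction N as [|N IH]; intros x.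
  - unfold TP; simpl. auto_derive; auto. ring.
  - unfold TP. simpl sum_f_R0.
    apply (is_derive_ext (fun y => TP n N c al be y +
       (al (S N) * cos (INR (S N * n) * y + INR (S N) * c) +
        be (S N) * sin (INR (S N * n) * y + INR (S N) * c)))).
    { intros y. reflexivity. }
    apply (is_derive_plus (fun y => TP n N c al be y)). apply IH.
    auto_derive; auto. ring.
Qed.

Lemma sum_zero (g : nat -> R) N : (forall j, (j <= N)%nat -> g j = 0) -> sum_f_R0 g N = 0.
Proof.
  intros H. induction N as [|N IH]; simpl.
  - apply H; lia.
  - rewrite IH by (intros; apply H; lia). rewrite H by lia. ring.
Qed.

Lemma sum_pick (g : nat -> R) N j0 :
  (j0 <= N)%nat -> (forall j, (j <= N)%nat -> j <> j0 -> g j = 0) -> sum_f_R0 g N = g j0.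
Proof.
  intros H1 H2. induction N as [|N IH].
  - assert (j0 = 0%nat) by lia. subst. reflexivity.
  - simpl. destruct (Nat.eq_dec j0 (S N)) as [->|Hne].
    + rewrite sum_zero; [ring|]. intros j Hj. apply H2; lia.
    + rewrite IH by (try lia; intros; apply H2; lia). rewrite (H2 (S N)) by lia. ring.
Qed.

Lemma Hs_TP n N c e sg : (1 <= n)%nat -> e 0%nat = 0 ->
  infinite_sum (Hs_term sg (TP n N c (fun _ => 0) e))
    (sum_f_R0 (fun j => PI * Rpower (1 + INR (j*n)^2) sg * e j ^ 2) N).
Proof.
  intros Hn He0.
  assert (HPI : PI <> 0) by apply PI_neq0.
  set (h := fun j => PI * Rpower (1 + INR (j*n)^2) sg * e j ^ 2).
  cut (forall k, sum_f_R0 (fun j => if Nat.eqb (j*n) k then h j else 0) N = Hs_term sg (TP n N c (fun _ => 0) e) k).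
  { intros Hpt. apply is_series_Reals.
    apply (is_series_ext (fun k => sum_f_R0 (fun j => if Nat.eqb (j*n) k then h j else 0) N)).
    exact Hpt.
    apply is_series_Reals. apply isum_sum. intros j. apply isum_ind. }
  intros k.
  destruct (classic (exists j0, (j0 <= N)%nat /\ (j0*n)%nat = k)) as [[j0 [Hj0 Hk]]|Hno].
  - assert (Hne : forall j, j <> j0 -> (j * n)%nat <> k) by (intros j Hj Hc; subst; apply Hj; nia).
    assert (Ec : fcos (TP n N c (fun _ => 0) e) k = Jv n c (fun _ => 0) e k 0 j0).
    { rewrite fcos_F. apply sum_pick; auto. intros j _ Hj. unfold Jv, Gv.
      destruct (Nat.eqb_spec (j*n) k); [exfalso; eapply Hne; eauto|]. ring. }
    assert (Es : fsin (TP n N c (fun _ => 0) e) k = Jv n c (fun _ => 0) e k (-(PI/2)) j0).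
    { rewrite fsin_F. apply sum_pick; auto. intros j _ Hj. unfold Jv, Gv.
      destruct (Nat.eqb_spec (j*n) k); [exfalso; eapply Hne; eauto|]. ring. }
    rewrite (sum_pick _ N j0); auto.
    2:{ intros j _ Hj. destruct (Nat.eqb_spec (j*n) k); [exfalso; eapply Hne; eauto|]. reflexivity. }
    subst k. rewrite Nat.eqb_refl. unfold Hs_term. revert Ec Es. unfold Jv, Gv, h.
    rewrite Nat.eqb_refl.
    destruct (j0 * n)%nat eqn:E; intros Ec Es; rewrite Ec; try rewrite Es.
    + assert (j0 = 0%nat) by nia. subst j0. rewrite He0. simpl. field. auto.
    + simpl Nat.eqb. cbv iota.
      rewrite cos_mpi2, cos_00.
      pose proof (sin2_cos2 (INR j0 * c)). unfold Rsqr in *.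
      set (Rp := Rpower (1 + INR (S n0) ^ 2) sg).
      set (sn := sin (INR j0 * c)) in *. set (cs := cos (INR j0 * c)) in *.
      transitivity (PI * Rp * e j0 ^ 2 * (sn * sn + cs * cs)).
      { rewrite H. ring. }
      field. auto.
  - rewrite sum_zero.
    2:{ intros j Hj. destruct (Nat.eqb_spec (j*n) k); [exfalso; apply Hno; eauto|]. reflexivity. }
    assert (Ec : fcos (TP n N c (fun _ => 0) e) k = 0).
    { rewrite fcos_F. apply sum_zero. intros j Hj. unfold Jv, Gv.
      destruct (Nat.eqb_spec (j*n) k); [exfalso; apply Hno; eauto|]. ring. }
    assert (Es : fsin (TP n N c (fun _ => 0) e) k = 0).
    { rewrite fsin_F. apply sum_zero. intros j Hj. unfold Jv, Gv.
      destruct (Nat.eqb_spec (j*n) k); [exfalso; apply Hno; eauto|]. ring. }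
    unfold Hs_term. destruct k; rewrite ?Ec, ?Es; field; auto.
Qed.

Lemma argE n y c j : INR (j*n) * y + INR j * c = INR j * (INR n * y + c).
Proof. rewrite mult_INR. ring. Qed.

Lemma cI0 T : cos (INR 0 * T) = 1.
Proof. simpl. rewrite Rmult_0_l. apply cos_0. Qed.
Lemma sI0 T : sin (INR 0 * T) = 0.
Proof. simpl. rewrite Rmult_0_l. apply sin_0. Qed.
Lemma cI1 T : cos (INR 1 * T) = cos T.
Proof. simpl. rewrite Rmult_1_l. reflexivity. Qed.
Lemma sI1 T : sin (INR 1 * T) = sin T.
Proof. simpl. rewrite Rmult_1_l. reflexivity. Qed.
Lemma cI2 T : cos (INR 2 * T) = 2 * cos T ^ 2 - 1.
Proof. replace (INR 2 * T) with (2 * T) by (simpl; ring). rewrite cos_2a_cos. ring. Qed.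
Lemma sI2 T : sin (INR 2 * T) = 2 * sin T * cos T.
Proof. replace (INR 2 * T) with (2 * T) by (simpl; ring). rewrite sin_2a. ring. Qed.
Lemma cI3 T : cos (INR 3 * T) = 4 * cos T ^ 3 - 3 * cos T.
Proof.
  replace (INR 3 * T) with (2 * T + T) by (simpl; ring). rewrite cos_plus, cos_2a_cos, sin_2a.
  pose proof (sin2_cos2 T). unfold Rsqr in H.
  apply Rminus_diag_uniq. transitivity (-2*cos T*(sin T*sin T + cos T*cos T - 1)); [ring|rewrite H; ring].
Qed.
Lemma cI4 T : cos (INR 4 * T) = 8 * cos T ^ 4 - 8 * cos T ^ 2 + 1.
Proof.
  replace (INR 4 * T) with (2 * (2 * T)) by (simpl; ring). rewrite !cos_2a_cos. ring.
Qed.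
Lemma sI3 T : sin (INR 3 * T) = sin T * (4 * cos T ^ 2 - 1).
Proof.
  replace (INR 3 * T) with (2 * T + T) by (simpl; ring). rewrite sin_plus, cos_2a_cos, sin_2a. ring.
Qed.
Lemma sI4 T : sin (INR 4 * T) = sin T * (8 * cos T ^ 3 - 4 * cos T).
Proof.
  replace (INR 4 * T) with (2 * (2 * T)) by (simpl; ring). rewrite sin_2a, cos_2a_cos, sin_2a. ring.
Qed.

Definition Pc0 A := -3*A^4 + 2*A^3 - 10*A^2 - 2*A.
Definition Pc1 A B := 12*A^3*B - 6*A^2*B + 20*A*B + 2*B.
Definition Pc2 A B := -18*A^2*B^2 + 6*A*B^2 - 10*B^2.
Definition Pc3 A B := 12*A*B^3 - 2*B^3.
Definition Pc4 (B : R) := -3*B^4.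

Definition rr (A B K : R) (j : nat) : R :=
  match j with
  | 0%nat => Pc0 A + Pc2 A B / 2 + 3 * Pc4 B / 8 + K / 2
  | 1%nat => Pc1 A B + 3 * Pc3 A B / 4
  | 2%nat => Pc2 A B / 2 + Pc4 B / 2 - K / 2
  | 3%nat => Pc3 A B / 4
  | 4%nat => Pc4 B / 8
  | _ => 0
  end.

Lemma Rnl_TP (A B : R) n c y :
  Rnl (A - B * cos (INR n * y + c)) (B * INR n * sin (INR n * y + c)) =
  TP n 4 c (rr A B (7 * B^2 * INR n ^ 2)) (fun _ => 0) y.
Proof.
  unfold TP. cbn [sum_f_R0]. rewrite !argE.
  rewrite cI0, sI0, cI1, sI1, cI2, sI2, cI3, sI3, cI4, sI4.
  set (T := INR n * y + c). unfold Rnl.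
  replace ((B * INR n * sin T) ^ 2) with (B^2 * INR n ^ 2 * (1 - cos T ^ 2)).
  2:{ pose proof (sin2_cos2 T). unfold Rsqr in H.
      apply Rminus_diag_uniq. transitivity (-(B^2 * INR n^2 * (sin T*sin T + cos T*cos T - 1))); [ring|rewrite H; ring]. }
  unfold rr, Pc0, Pc1, Pc2, Pc3, Pc4. field.
Qed.

Definition Aa (om : R) (n : nat) := (om / INR n - 1) / 14.
Definition Bb (s : R) (n : nat) := Rpower (INR n) (-s) / 14.
Definition KK (s : R) (n : nat) := 7 * Bb s n ^ 2 * INR n ^ 2.
Definition ee (s om : R) (n : nat) (j : nat) : R :=
  INR (j*n) * (rr (Aa om n) (Bb s n) (KK s n) j / (1 + INR (j*n)^2))
  + (if Nat.eqb j 2 then 7 * Bb s n ^ 2 * INR n else 0).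

Lemma u_eq s om n tt y : u_app s om n tt y = Aa om n - Bb s n * cos (INR n * y + om * tt).
Proof. unfold u_app, Aa, Bb. unfold Rdiv. ring. Qed.

Lemma dt_u s om n t x :
  derivable_pt_lim (fun tau => u_app s om n tau x) t (Bb s n * om * sin (INR n * x + om * t)).
Proof.
  apply is_derive_Reals.
  eapply is_derive_ext. { intros tau. symmetry. apply u_eq. }
  set (B := Bb s n). set (A := Aa om n). auto_derive; auto. ring.
Qed.

Lemma dx_u s om n t y :
  derivable_pt_lim (fun z => u_app s om n t z) y (Bb s n * INR n * sin (INR n * y + om * t)).
Proof.
  apply is_derive_Reals.
  eapply is_derive_ext. { intros z. symmetry. apply u_eq. }
  set (B := Bb s n). set (A := Aa om n). auto_derive; auto. ring.
Qed.

Lemma Err_eq s om n t : (1 <= n)%nat ->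
  Err s om n t = TP n 4 (om * t) (fun _ => 0) (ee s om n).
Proof.
  intros Hn. assert (Hn' : INR n <> 0) by (apply not_0_INR; lia).
  apply functional_extensionality. intros x.
  unfold Err. cbv zeta.
  rewrite (deriv_eq _ _ _ (dt_u s om n t x)).
  rewrite (deriv_eq _ _ _ (dx_u s om n t x)).
  assert (Hg : (fun y => Rnl (u_app s om n t y) (deriv (fun z => u_app s om n t z) y))
               = TP n 4 (om * t) (rr (Aa om n) (Bb s n) (KK s n)) (fun _ => 0)).
  { apply functional_extensionality. intros y.
    rewrite (deriv_eq _ _ _ (dx_u s om n t y)), u_eq. unfold KK. apply Rnl_TP. }
  rewrite Hg.
  assert (HL : Lambda_m2 (TP n 4 (om * t) (rr (Aa om n) (Bb s n) (KK s n)) (fun _ => 0)) =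
     TP n 4 (om * t) (fun j => rr (Aa om n) (Bb s n) (KK s n) j / (1 + INR (j*n) ^ 2))
                     (fun j => 0 / (1 + INR (j*n) ^ 2))).
  { apply functional_extensionality. intros y. apply Lambda_F. }
  rewrite HL, (deriv_eq _ _ _ (deriv_TP _ _ _ _ _ x)).
  rewrite u_eq. unfold TP, ee. cbn [sum_f_R0 Nat.eqb]. rewrite !argE.
  rewrite cI0, sI0, cI1, sI1, cI2, sI2, cI3, sI3, cI4, sI4.
  assert (Hp : forall j, 1 + INR (j*n) ^ 2 <> 0) by (intros j; pose proof (pos_INR (j*n)); nra).
  unfold Aa at 1. field. repeat split; auto.
Qed.

Lemma Xb (m N q B : R) : 1 <= N -> N <= m -> q^2 <= (14*B)^2 ->
  (m * (q / (1 + m^2)))^2 <= (14*B/N)^2.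
Proof.
  intros H1 H2 H3.
  assert (Hw : 0 <= m / (1 + m^2) <= 1 / N).
  { split. apply Rdiv_le_0_compat; nra.
    cut (0 <= 1/N - m/(1+m^2)). lra.
    replace (1/N - m/(1+m^2)) with ((1 + m^2 - m*N)/(N*(1+m^2))) by (field; split; nra).
    apply Rdiv_le_0_compat; nra. }
  replace (m * (q / (1 + m^2))) with (q * (m / (1+m^2))) by (field; nra).
  replace (14*B/N) with (14*B * (1/N)) by (field; lra).
  rewrite (Rpow_mult_distr q), (Rpow_mult_distr (14*B)). apply Rmult_le_compat; try apply pow2_ge_0; auto.
  apply pow_incr. auto.
Qed.

Lemma qbound A B g : -1/7 <= A <= 0 -> 0 < B <= 1/14 -> -14 <= g A B <= 14 ->
  (B * g A B)^2 <= (14 * B)^2.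
Proof.
  intros HA HB Hg. assert (g A B ^ 2 <= 14 ^ 2) by nra.
  rewrite !Rpow_mult_distr. rewrite (Rmult_comm (14^2)). apply Rmult_le_compat_l; auto. apply pow2_ge_0.
Qed.

Lemma ee_bound s om n j : 0 < s -> (om = 1 \/ om = -1) -> (1 <= n)%nat -> (j <= 4)%nat ->
  ee s om n j ^ 2 <= 2 * ((14 * Bb s n / INR n)^2 + (INR n * (14 * Bb s n)^2)^2).
Proof.
  intros Hs Hom Hn Hj.
  assert (HN : 1 <= INR n) by (apply (le_INR 1); lia).
  assert (Heps : 0 < Rpower (INR n) (-s) <= 1).
  { split. apply exp_pos. rewrite <- (Rpower_O (INR n)) by lra. apply Rle_Rpower; lra. }
  assert (HB : 0 < Bb s n <= 1/14) by (unfold Bb; lra).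
  assert (HA : -1/7 <= Aa om n <= 0).
  { unfold Aa. assert (-1 <= om / INR n <= 1).
    { destruct Hom as [->| ->]; split; apply (Rmult_le_reg_r (INR n)); try lra; field_simplify; lra. }
    lra. }
  set (A := Aa om n) in *. set (B := Bb s n) in *. set (N := INR n) in *.
  assert (Hsq : forall X Y, (X + Y)^2 <= 2 * (X^2 + Y^2)) by (intros X Y; pose proof (pow2_ge_0 (X - Y)); nra).
  assert (Hpos : 0 <= (14 * B / N)^2) by apply pow2_ge_0.
  assert (Hpos2 : 0 <= (N * (14 * B)^2)^2) by apply pow2_ge_0.
  assert (Hm : forall k, (1 <= k)%nat -> N <= INR (k * n)).
  { intros k Hk. unfold N. apply le_INR. nia. }
  unfold ee. fold A B.
  destruct j as [|[|[|[|[|j]]]]]; try lia; cbn [Nat.eqb].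
  - simpl. nra.
  - rewrite Rplus_0_r.
    assert (X := Xb (INR (1*n)) N (rr A B (KK s n) 1) B HN (Hm 1%nat ltac:(lia))).
    cut ((rr A B (KK s n) 1)^2 <= (14*B)^2). { intros H; specialize (X H); nra. }
    pose proof (qbound A B (fun a b => 12 * a ^ 3 - 6 * a ^ 2 + 20 * a + 2 + 3 * (12 * a * b ^ 2 - 2 * b ^ 2) / 4) HA HB) as Q.
    cbv beta in Q. replace (rr A B (KK s n) 1) with (B * (12 * A ^ 3 - 6 * A ^ 2 + 20 * A + 2 + 3 * (12 * A * B ^ 2 - 2 * B ^ 2) / 4)).
    apply Q. split; nra.
    unfold rr, Pc1, Pc3. field.
  - set (q := B * (-9 * A^2 * B + 3 * A * B - 5 * B - 3 * B^3 / 2)).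
    assert (Hq : q^2 <= (14*B)^2).
    { pose proof (qbound A B (fun a b => -9 * a^2 * b + 3 * a * b - 5 * b - 3 * b^3 / 2) HA HB) as Q.
      apply Q. cbv beta. split; nra. }
    assert (HX := Xb (INR (2*n)) N q B HN (Hm 2%nat ltac:(lia)) Hq).
    assert (Hm2 : INR (2*n) = 2 * N) by (unfold N; rewrite mult_INR; reflexivity).
    set (Y := 7 * B^2 * N * (1 + 3 * N^2) / (1 + 4 * N^2)).
    assert (E : INR (2 * n) * (rr A B (KK s n) 2 / (1 + INR (2 * n) ^ 2)) + 7 * B ^ 2 * INR n
               = INR (2*n) * (q / (1 + INR (2*n)^2)) + Y).
    { fold N. unfold Y, q, rr, KK, Pc2, Pc4. fold B N. rewrite Hm2. field. nra. }
    rewrite E.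
    assert (HY : 0 <= Y <= N * (14 * B)^2).
    { unfold Y. split.
      - apply Rdiv_le_0_compat; [|nra]. pose proof (pow2_ge_0 B); pose proof (pow2_ge_0 N). apply Rmult_le_pos; [apply Rmult_le_pos; [apply Rmult_le_pos; lra|lra]|lra].
      - assert (Hr : (1 + 3 * N^2) / (1 + 4 * N^2) <= 1).
        { cut (0 <= 1 - (1 + 3 * N^2) / (1 + 4 * N^2)). lra.
          replace (1 - (1 + 3 * N^2) / (1 + 4 * N^2)) with (N^2 / (1 + 4 * N^2)) by (field; nra).
          apply Rdiv_le_0_compat; nra. }
        pose proof (pow2_ge_0 B).
        assert (H7 : 0 <= 7 * B^2 * N) by (apply Rmult_le_pos; [apply Rmult_le_pos; lra | lra]).
        unfold Rdiv. rewrite Rmult_assoc. fold (Rdiv (1 + 3 * N^2) (1 + 4 * N^2)).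
        apply Rle_trans with (7 * B^2 * N * 1). apply Rmult_le_compat_l; auto.
        replace (N * (14 * B)^2) with (196 * B^2 * N) by ring. nra. }
    assert (Y^2 <= (N * (14*B)^2)^2) by (apply pow_incr; auto).
    specialize (Hsq (INR (2 * n) * (q / (1 + INR (2 * n) ^ 2))) Y). nra.
  - rewrite Rplus_0_r.
    assert (X := Xb (INR (3*n)) N (rr A B (KK s n) 3) B HN (Hm 3%nat ltac:(lia))).
    cut ((rr A B (KK s n) 3)^2 <= (14*B)^2). { intros H; specialize (X H); nra. }
    pose proof (qbound A B (fun a b => 3 * a * b^2 - b^2 / 2) HA HB) as Q.
    cbv beta in Q. replace (rr A B (KK s n) 3) with (B * (3 * A * B^2 - B^2 / 2)).
    apply Q. split; nra.
    unfold rr, Pc3. field.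
  - rewrite Rplus_0_r.
    assert (X := Xb (INR (4*n)) N (rr A B (KK s n) 4) B HN (Hm 4%nat ltac:(lia))).
    cut ((rr A B (KK s n) 4)^2 <= (14*B)^2). { intros H; specialize (X H); nra. }
    pose proof (qbound A B (fun a b => -3 * b^3 / 8) HA HB) as Q.
    cbv beta in Q. replace (rr A B (KK s n) 4) with (B * (-3 * B^3 / 8)).
    apply Q. split; nra.
    unfold rr, Pc4. field.
Qed.

Lemma Rp_bound N m sg : 1 <= N -> 0 <= m <= 4 * N -> 0 <= sg <= 1 ->
  Rpower (1 + m^2) sg <= 17 * Rpower N (2 * sg).
Proof.
  intros HN Hm Hs.
  apply Rle_trans with (Rpower (17 * N^2) sg).
  { apply Rle_Rpower_l; [lra|]. split; nra. }
  rewrite <- Rpower_mult_distr by nra.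
  replace (N^2) with (Rpower N (INR 2)) by (apply Rpower_pow; lra).
  rewrite Rpower_mult. replace (INR 2 * sg) with (2 * sg) by (simpl; ring).
  apply Rmult_le_compat_r. left; apply exp_pos.
  rewrite <- (Rpower_1 17) at 2 by lra. apply Rle_Rpower; lra.
Qed.

Theorem lemma3p1 (s : R) (hs : 3 / 2 < s) :
  exists C : R, 0 < C /\
    forall (sigma omega : R) (n : nat) (t : R),
      1 / 2 < sigma -> sigma <= 1 ->
      (omega = 1 \/ omega = -1) ->
      (1 <= n)%nat ->
      exists l : R,
        infinite_sum (Hs_term sigma (Err s omega n t)) l /\
        sqrt l <=
          (if Rlt_dec s 2
           then C * Rpower (INR n) (- 2 * s + 1 + sigma)
           else C * Rpower (INR n) (- s - 1 + sigma)).
Proof.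
  exists 37. split; [lra|].
  intros sg om n t Hs1 Hs2 Hom Hn.
  rewrite Err_eq by auto.
  exists (sum_f_R0 (fun j => PI * Rpower (1 + INR (j*n)^2) sg * ee s om n j ^ 2) 4).
  split.
  { apply Hs_TP; auto. unfold ee. simpl. ring. }
  assert (HN : 1 <= INR n) by (apply (le_INR 1); lia).
  set (N := INR n) in *.
  set (eps := Rpower N (-s)).
  assert (Heps : 14 * Bb s n = eps) by (unfold Bb, eps, N; field).
  set (R2 := Rpower N (2 * sg)).
  assert (Hterm : forall j, (j <= 4)%nat ->
     PI * Rpower (1 + INR (j*n)^2) sg * ee s om n j ^ 2 <= 136 * (R2 * ((eps/N)^2 + (N*eps^2)^2))).
  { intros j Hj.
    pose proof (ee_bound s om n j ltac:(lra) Hom Hn Hj) as He. rewrite Heps in He. fold N in He.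
    assert (Hm : 0 <= INR (j*n) <= 4 * N).
    { split. apply pos_INR. unfold N. replace 4 with (INR 4) by (simpl; ring).
      rewrite <- mult_INR. apply le_INR. nia. }
    pose proof (Rp_bound N (INR (j*n)) sg HN Hm ltac:(lra)) as Hr. fold R2 in Hr.
    pose proof PI_4. pose proof PI_RGT_0.
    replace (136 * (R2 * ((eps / N) ^ 2 + (N * eps ^ 2) ^ 2)))
      with ((4 * (17 * R2)) * (2 * ((eps / N) ^ 2 + (N * eps ^ 2) ^ 2))) by ring.
    apply Rmult_le_compat; try apply pow2_ge_0.
    - apply Rmult_le_pos; [lra|]. left; apply exp_pos.
    - apply Rmult_le_compat; try lra. left; apply exp_pos.
    - auto. }
  assert (Hl : sum_f_R0 (fun j => PI * Rpower (1 + INR (j*n)^2) sg * ee s om n j ^ 2) 4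
               <= 5 * (136 * (R2 * ((eps/N)^2 + (N*eps^2)^2)))).
  { cbn [sum_f_R0].
    pose proof (Hterm 0%nat ltac:(lia)). pose proof (Hterm 1%nat ltac:(lia)).
    pose proof (Hterm 2%nat ltac:(lia)). pose proof (Hterm 3%nat ltac:(lia)).
    pose proof (Hterm 4%nat ltac:(lia)). lra. }
  set (a := Rpower N (-s-1+sg)). set (b := Rpower N (- 2 * s + 1 + sg)).
  assert (Ha : a = eps / N * Rpower N sg).
  { unfold a. replace (-s-1+sg) with (-s + (-(1)) + sg) by ring.
    rewrite !Rpower_plus, (Rpower_Ropp N 1), Rpower_1 by lra. unfold eps. field. lra. }
  assert (Hb : b = N * eps^2 * Rpower N sg).
  { unfold b. replace (- 2 * s + 1 + sg) with (1 + (-s + (-s + sg))) by ring.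
    rewrite !Rpower_plus, Rpower_1 by lra. unfold eps. ring. }
  assert (HR2 : R2 = Rpower N sg * Rpower N sg).
  { unfold R2. replace (2 * sg) with (sg + sg) by ring. apply Rpower_plus. }
  assert (Hab : R2 * ((eps/N)^2 + (N*eps^2)^2) = a^2 + b^2).
  { rewrite Ha, Hb, HR2. ring. }
  rewrite Hab in Hl.
  assert (Ha0 : 0 <= a) by (left; apply exp_pos).
  assert (Hb0 : 0 <= b) by (left; apply exp_pos).
  destruct (Rlt_dec s 2) as [Hlt|Hge].
  - assert (a <= b) by (apply Rle_Rpower; lra).
    rewrite <- (sqrt_pow2 (37 * b)) by lra. apply sqrt_le_1_alt. nra.
  - assert (b <= a) by (apply Rle_Rpower; lra).
    rewrite <- (sqrt_pow2 (37 * a)) by lra. apply sqrt_le_1_alt. nra.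
Qed.
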